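(* Let $r\ge 1$ be an integer and let $G$ be an $r$-regular finite simple graph of order $n$. Then $$\gamma_{st}(G)=2\,\gamma_{\times\lceil (r+1)/2\rceil,t}(G)-n,$$ and, if moreover $r\ge 2$, $$\alpha^{2}_{st}(G)=n-2\,\gamma_{\times\lfloor r/2\rfloor,t}(G).$$
   Context: For a vertex $v$ of a graph $G=(V,E)$, $N(v)$ is its open neighborhood, and for $f:V\to\mathbb{R}$ and $B\subseteq V$ write $f(B)=\sum_{v\in B}f(v)$; $f(V)$ is the weight of $f$. A signed total dominating function is a function $f:V\to\{-1,1\}$ with $f(N(v))\ge 1$ for all $v\in V$; $\gamma_{st}(G)$ is the minimum weight of such a function. A signed total $2$-independence function is a function $f:V\to\{-1,1\}$ with $f(N(v))\le 1$ for all $v\in V$; $\alpha^{2}_{st}(G)$ is the maximum weight of such a function. For an integer $1\le k\le \delta(G)$, a $k$-tuple total dominating set of $G$ is a set $D\subseteq V$ with $|N(v)\cap D|\ge k$ for all $v\in V$; $\gamma_{\times k,t}(G)$ is the minimum cardinality of a $k$-tuple total dominating set. *)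

(* Defs.v *)
From HB Require Import structures.
From mathcomp Require Import all_boot all_order all_algebra.
Set Implicit Arguments. Unset Strict Implicit. Unset Printing Implicit Defensive.
Import Order.TTheory GRing.Theory Num.Theory.

(* A finite simple graph: vertex type T : finType, adjacency e : rel T,
   assumed symmetric and irreflexive (hypotheses in the theorem).
   Open neighborhood N(v) = [set u | e v u]. *)
Definition nbhd (T : finType) (e : rel T) (v : T) : {set T} := [set u | e v u].

Local Open Scope ring_scope.

Definition signed (T : finType) (f : T -> int) : Prop :=
  forall v, f v = 1 \/ f v = -1.

Definition fsum (T : finType) (f : T -> int) (B : {set T}) : int :=
  \sum_(v in B) f v.
Definition weight (T : finType) (f : T -> int) : int := \sum_(v : T) f v.

Definition STDF (T : finType) (e : rel T) (f : T -> int) : Prop :=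
  signed f /\ forall v, 1 <= fsum f (nbhd e v).

Definition ST2IF (T : finType) (e : rel T) (f : T -> int) : Prop :=
  signed f /\ forall v, fsum f (nbhd e v) <= 1.

Definition is_gamma_st (T : finType) (e : rel T) (g : int) : Prop :=
  (exists f, STDF e f /\ weight f = g) /\ (forall f, STDF e f -> g <= weight f).

Definition is_alpha2_st (T : finType) (e : rel T) (a : int) : Prop :=
  (exists f, ST2IF e f /\ weight f = a) /\ (forall f, ST2IF e f -> weight f <= a).

Local Close Scope ring_scope.

Definition ktuple_tds (T : finType) (e : rel T) (k : nat) (D : {set T}) : bool :=
  [forall v, k <= #|nbhd e v :&: D|].

(* gamma_{x k, t}(G): minimum cardinality of a k-tuple total dominating set
   (the default #|T| is irrelevant whenever such a set exists, e.g. 1 <= k <= delta). *)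
Definition gamma_kt (T : finType) (e : rel T) (k : nat) : nat :=
  \big[minn/#|T|]_(D : {set T} | ktuple_tds e k D) #|D|.

(* Main.v *)
Require Import Defs.
From HB Require Import structures.
From mathcomp Require Import all_boot all_order all_algebra zify.
Import Order.TTheory GRing.Theory Num.Theory.

Lemma minseq_le (I : eqType) (s : seq I) (P : pred I) (F : I -> nat) x j :
  j \in s -> P j -> (\big[minn/x]_(i <- s | P i) F i <= F j)%N.
Proof.
elim: s => [//|a s IH]; rewrite in_cons big_cons => /orP [/eqP <- ->|Hj Pj].
  exact: geq_minl.
case: (P a); last exact: IH.
exact: leq_trans (geq_minr _ _) (IH Hj Pj).
Qed.

Lemma gk_le (T : finType) (e : rel T) k D : ktuple_tds e k D -> (gamma_kt e k <= #|D|)%N.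
Proof. by move=> H; rewrite /gamma_kt; apply: minseq_le => //; rewrite mem_index_enum. Qed.

Lemma gk_att (T : finType) (e : rel T) k : ktuple_tds e k setT ->
  exists D, ktuple_tds e k D /\ #|D| = gamma_kt e k.
Proof.
move=> HT.
have : (gamma_kt e k == #|T|) \/ exists D, ktuple_tds e k D /\ #|D| = gamma_kt e k.
  rewrite /gamma_kt; apply: (big_ind (fun m => m == #|T| \/ exists D, ktuple_tds e k D /\ #|D| = m)).
  - by left.
  - move=> x y Hx Hy; rewrite /minn; case: ifP => _; [exact Hx| exact Hy].
  - move=> D HD; right; by exists D.
case=> [/eqP ->|//]; exists setT; by rewrite cardsT.
Qed.

Local Open Scope ring_scope.

Lemma sum_sign (T : finType) (f : T -> int) (s : int) (D B : {set T}) :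
  (forall v, f v = if v \in D then s else - s) ->
  \sum_(v in B) f v = s * (2 * (#|B :&: D|)%:Z - (#|B|)%:Z).
Proof.
move=> Hf.
have -> : \sum_(v in B) f v = \sum_(v in B) (s * (2 * ((v \in D)%:R) - 1)).
  apply: eq_bigr => v _; rewrite Hf; case: (v \in D) => /=; rewrite ?mulr1 ?mulr0; lia.
rewrite -mulr_sumr; apply: f_equal.
rewrite sumrB -mulr_sumr sumr_const -natr_sum natz.
have -> : (\sum_(i in B) (i \in D : nat))%N = #|B :&: D|.
  rewrite -sum1_card [RHS]big_mkcond [LHS]big_mkcond; apply: eq_bigr => i _.
  by rewrite inE; case: (i \in B); case: (i \in D).
by rewrite !natz.
Qed.

Lemma weight_sign (T : finType) (f : T -> int) (s : int) (D : {set T}) :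
  (forall v, f v = if v \in D then s else - s) ->
  weight f = s * (2 * (#|D|)%:Z - (#|T|)%:Z).
Proof.
move=> Hf; rewrite /weight (eq_bigl (fun v => v \in [set: T])); last by move=> v; rewrite inE.
by rewrite (sum_sign _ _ _ _ _ Hf) setTI cardsT.
Qed.

Lemma signed_set (T : finType) (f : T -> int) (s : int) : signed f -> (s = 1 \/ s = -1) ->
  forall v, f v = if v \in [set u | f u == s] then s else - s.
Proof.
move=> Hs hs v; rewrite inE; case: (Hs v) => ->; case: hs => ->; by [].
Qed.

Theorem mainTheorem6 (T : finType) (e : rel T) (r : nat)
  (esym : symmetric e) (eirr : irreflexive e) (hr : (1 <= r)%N)
  (hreg : forall v : T, #|nbhd e v| = r) :
  is_gamma_st e (2 * (gamma_kt e ((r + 2) %/ 2))%:Z - (#|T|)%:Z)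
  /\ ((2 <= r)%N -> is_alpha2_st e ((#|T|)%:Z - 2 * (gamma_kt e (r %/ 2))%:Z)).
Proof.
split.
- set k := ((r + 2) %/ 2)%N.
  have kT : ktuple_tds e k setT.
    by apply/forallP => v; rewrite setIT hreg /k; lia.
  split.
  + have [D0 [HD0 HcD0]] := @gk_att _ _ _ kT.
    pose f := fun v => if v \in D0 then 1 else (-1 : int).
    have Hf : forall v, f v = if v \in D0 then 1 else - 1 by [].
    exists f; split; last by rewrite (weight_sign _ _ _ _ Hf) mul1r HcD0.
    split; first by move=> v; rewrite /f; case: (v \in D0); [left|right].
    move=> v; rewrite /fsum (sum_sign _ _ _ _ _ Hf) mul1r hreg.
    move/forallP: HD0 => /(_ v); rewrite /k => H; lia.
  + move=> f [Hs Hd].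
    have Hf := @signed_set _ _ (1) Hs (or_introl erefl).
    set D := [set u | f u == 1] in Hf.
    rewrite (weight_sign _ _ _ _ Hf) mul1r.
    have : ktuple_tds e k D.
      apply/forallP => v; have := Hd v; rewrite /fsum (sum_sign _ _ _ _ _ Hf) mul1r hreg /k; lia.
    move/gk_le; lia.
- move=> hr2; set k := (r %/ 2)%N.
  have kT : ktuple_tds e k setT.
    by apply/forallP => v; rewrite setIT hreg /k; lia.
  split.
  + have [D0 [HD0 HcD0]] := @gk_att _ _ _ kT.
    pose f := fun v => if v \in D0 then (-1 : int) else 1.
    have Hf : forall v, f v = if v \in D0 then -1 else - - 1 by move=> v; rewrite opprK.
    exists f; split; last by rewrite (weight_sign _ _ _ _ Hf) HcD0; lia.
    split; first by move=> v; rewrite /f; case: (v \in D0); [right|left].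
    move=> v; rewrite /fsum (sum_sign _ _ _ _ _ Hf) hreg.
    move/forallP: HD0 => /(_ v); rewrite /k => H; lia.
  + move=> f [Hs Hd].
    have Hf := @signed_set _ _ (-1) Hs (or_intror erefl).
    set D := [set u | f u == -1] in Hf.
    rewrite (weight_sign _ _ _ _ Hf).
    have : ktuple_tds e k D.
      apply/forallP => v; have := Hd v; rewrite /fsum (sum_sign _ _ _ _ _ Hf) hreg /k; lia.
    move/gk_le; lia.
Qed.
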